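(* Let $h\ge1$ and let $P(u)=\sum_{s\in\mathcal{S}}p_su^s$ be the step polynomial of a finite step set $\mathcal{S}\subset\mathbb{Z}$ with weights $p_s>0$, which is symmetric, i.e. $P(u)=P(1/u)$, and satisfies $\max\mathcal{S}=h$. For $k\ge1$ let $G_{0,k}(z)$ be the generating function (by length, counted with weight = product of step weights) of positive walks from the origin to altitude $k$, i.e. walks $0=y_0,\dots,y_n=k$ with steps in $\mathcal{S}$ and $y_i\ge1$ for $1\le i\le n$, and let $M_{>0}(z)$ be the generating function of positive meanders, i.e. walks $0=y_0,\dots,y_n$ with steps in $\mathcal{S}$ and $y_i\ge1$ for $1\le i\le n$ (ending anywhere; including the empty walk). Let $u_1(z),\dots,u_h(z)$ be the small roots of $1-zP(u)=0$, i.e. the $h$ roots (Puiseux series in $z$) with $\lim_{z\to0}u_i(z)=0$. Then $$M_{>0}(z)=1+\sum_{k\ge1}G_{0,k}(z)=\prod_{i=1}^h\frac{1}{1-u_i(z)},\qquad G_{0,k}(z)=h_k\big(u_1(z),\dots,u_h(z)\big)\quad(k\ge1),$$ where $h_k(x_1,\dots,x_h)=\sum_{i_1+\dots+i_h=k,\ i_1,\dots,i_h\ge0}x_1^{i_1}\cdots x_h^{i_h}$ is the complete homogeneous symmetric polynomial of degree $k$. *)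

(* Defs.v *)
From HB Require Import structures.
From mathcomp Require Import all_boot all_order all_algebra.
From mathcomp Require Import reals complex.
Set Implicit Arguments. Unset Strict Implicit. Unset Printing Implicit Defensive.
Import Order.TTheory GRing.Theory Num.Theory.
Local Open Scope ring_scope.

Section Defs.
Variable R : realType.
Local Notation C := R[i].

Definition stepP (S : seq int) (p : int -> R) (u : C) : C :=
  \sum_(s <- S) (p s)%:C%C * u ^ s.

(* walks of length n: sequences of n steps, the j-th step being S_(w j) *)
Definition wstep (S : seq int) n (w : {ffun 'I_n -> 'I_(size S)}) (j : 'I_n) : int :=
  nth 0 S (w j).

Definition walt (S : seq int) n (w : {ffun 'I_n -> 'I_(size S)}) (m : nat) : int :=
  \sum_(j < n | (j < m)%N) wstep w j.

Definition wpos (S : seq int) n (w : {ffun 'I_n -> 'I_(size S)}) : bool :=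
  [forall m : 'I_n, 0 < walt w m.+1].

Definition wweight (S : seq int) (p : int -> R) n (w : {ffun 'I_n -> 'I_(size S)}) : R :=
  \prod_(j < n) p (wstep w j).

(* coefficient of z^n in G_{0,k}(z) : positive walks of length n from 0 to k *)
Definition Gcoef (S : seq int) (p : int -> R) (k : int) (n : nat) : R :=
  \sum_(w : {ffun 'I_n -> 'I_(size S)} | wpos w && (walt w n == k)) wweight p w.

(* coefficient of z^n in M_{>0}(z) : positive meanders of length n *)
Definition Mcoef (S : seq int) (p : int -> R) (n : nat) : R :=
  \sum_(w : {ffun 'I_n -> 'I_(size S)} | wpos w) wweight p w.

Definition series_to (a : nat -> C) (l : C) : Prop :=
  forall e : R, 0 < e -> exists N : nat, forall n : nat, (N <= n)%N ->
    `| \sum_(i < n) a i - l | < e%:C%C.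

Definition hcomplete (h k : nat) (x : 'I_h -> C) : C :=
  \sum_(t : {ffun 'I_h -> 'I_k.+1} | (\sum_(i < h) (t i : nat) == k)%N)
     \prod_(i < h) x i ^+ t i.

(* u^h (1 - z P(u)), a polynomial in u when min S >= -h *)
Definition kernel_poly (S : seq int) (p : int -> R) (h : nat) (z : C) : {poly C} :=
  'X^h - z *: \sum_(s <- S) (p s)%:C%C *: 'X^(absz (s + h%:Z)).

(* u_1,...,u_h are the small roots of 1 - z P(u) = 0 : near z = 0 (z <> 0) they
   are roots (with multiplicity) of u^h (1 - z P(u)) and each tends to 0 *)
Definition small_roots (S : seq int) (p : int -> R) (h : nat)
  (u : 'I_h -> C -> C) : Prop :=
  (exists r : R, 0 < r /\ forall z : C, 0 < `|z| < r%:C%C ->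
      (\prod_(i < h) ('X - (u i z)%:P)) %| kernel_poly S p h z) /\
  (forall i : 'I_h, forall e : R, 0 < e -> exists d : R, 0 < d /\
      forall z : C, 0 < `|z| < d%:C%C -> `|u i z| < e%:C%C).

End Defs.

(* Main.v *)
Require Import Defs.
From HB Require Import structures.
From mathcomp Require Import all_boot all_order all_algebra.
From mathcomp Require Import reals complex.
From mathcomp Require Import zify ring lra.
Import Order.TTheory GRing.Theory Num.Theory.
Local Open Scope ring_scope.

Module Helpers.
Set Implicit Arguments. Unset Strict Implicit. Unset Printing Implicit Defensive.


Lemma poly_eq0_nz (F : numFieldType) (q : {poly F}) :
  (forall t, t != 0 -> q.[t] = 0) -> q = 0.
Proof.
move=> H; apply/eqP; apply/negPn/negP => qn0.
pose rs : seq F := [seq (a.+1)%:R | a <- iota 0 (size q)].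
have Hall : all (root q) rs.
  by apply/allP => x /mapP [a _ ->]; rewrite /root H // pnatr_eq0.
have Hu : uniq rs.
  by rewrite map_inj_uniq ?iota_uniq // => a b /eqP; rewrite eqr_nat => /eqP [].
have := max_poly_roots qn0 Hall Hu.
by rewrite size_map size_iota ltnn.
Qed.

Section Walks.
Variables (R : realType) (S : seq int) (p : int -> R).
Local Notation T := 'I_(size S).

Definition wext n (w : {ffun 'I_n -> T}) (c : T) : {ffun 'I_n.+1 -> T} :=
  [ffun j : 'I_n.+1 => oapp w c (insub (val j))].

Lemma wext_widen n (w : {ffun 'I_n -> T}) c j :
  wext w c (widen_ord (leqnSn n) j) = w j.
Proof. by rewrite ffunE /= valK. Qed.

Lemma wext_max n (w : {ffun 'I_n -> T}) c : wext w c ord_max = c.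
Proof. by rewrite ffunE /= insubF // ltnn. Qed.

Lemma walt_ext n (w : {ffun 'I_n -> T}) c m :
  walt (wext w c) m = walt w m + (if (n < m)%N then nth 0 S c else 0).
Proof.
rewrite /walt big_mkcond big_ord_recr /= -big_mkcond /= /wstep wext_max.
by congr (_ + _); apply: eq_bigr => j _; rewrite wext_widen.
Qed.

Lemma walt_full n (w : {ffun 'I_n -> T}) m : (n <= m)%N ->
  walt w m = \sum_(j < n) wstep w j.
Proof. by move=> H; apply: eq_bigl => j; rewrite (leq_trans (ltn_ord j) H). Qed.

Lemma wpos_ext n (w : {ffun 'I_n -> T}) c :
  wpos (wext w c) = wpos w && (0 < walt w n + nth 0 S c).
Proof.
apply/forallP/andP => [H|[/forallP H1 H2] m].
  split.
    apply/forallP => m; have := H (widen_ord (leqnSn n) m).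
    rewrite walt_ext /= (_ : (n < m.+1)%N = false) ?addr0 //.
    by apply/negbTE; rewrite -leqNgt; exact: ltn_ord.
  have := H ord_max; rewrite walt_ext /= ltnSn.
  by rewrite (walt_full _ (leqnSn n)) (walt_full _ (leqnn n)).
rewrite walt_ext; case: (ltnP m n) => Hm.
  rewrite (_ : (n < m.+1)%N = false) ?addr0; last first.
    by apply/negbTE; rewrite -leqNgt.
  exact: (H1 (Ordinal Hm)).
have -> : (n < m.+1)%N by rewrite ltnS.
by rewrite (walt_full _ (leqW Hm)) -(walt_full _ (leqnn n)).
Qed.

Lemma wweight_ext n (w : {ffun 'I_n -> T}) c :
  wweight p (wext w c) = wweight p w * p (nth 0 S c).
Proof.
rewrite /wweight big_ord_recr /= /wstep wext_max; congr (_ * _).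
by apply: eq_bigr => j _; rewrite wext_widen.
Qed.

Lemma sum_ext n (F : {ffun 'I_n.+1 -> T} -> R) :
  \sum_v F v = \sum_(w : {ffun 'I_n -> T}) \sum_c F (wext w c).
Proof.
rewrite pair_big /=.
rewrite (reindex (fun pc : {ffun 'I_n -> T} * T => wext pc.1 pc.2)) //.
apply: onW_bij.
exists (fun v : {ffun 'I_n.+1 -> T} =>
          ([ffun j => v (widen_ord (leqnSn n) j)], v ord_max)).
  move=> [w c] /=; congr (_, _); last by rewrite wext_max.
  by apply/ffunP => j; rewrite ffunE wext_widen.
move=> v /=; apply/ffunP => j; rewrite ffunE.
case: insubP => [j' _ Hj' | Hn] /=.
  by rewrite ffunE; congr (v _); apply: val_inj; rewrite /= Hj'.
congr (v _); apply: val_inj => /=.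
by have := ltn_ord j; rewrite ltnS leq_eqVlt (negbTE Hn) orbF => /eqP.
Qed.

Lemma Gcoef_S n (k : int) : 0 < k ->
  Gcoef S p k n.+1 = \sum_(s <- S) p s * Gcoef S p (k - s) n.
Proof.
move=> kpos.
rewrite /Gcoef big_mkcond sum_ext exchange_big (big_nth 0) big_mkord.
apply: eq_bigr => c _; rewrite mulr_sumr [RHS]big_mkcond.
apply: eq_bigr => w _.
rewrite wpos_ext walt_ext ltnSn (walt_full _ (leqnSn n)) -(walt_full _ (leqnn n)).
rewrite wweight_ext.
have -> : (walt w n + nth 0 S c == k) = (walt w n == k - nth 0 S c).
  by apply/eqP/eqP => Hk; [rewrite -Hk addrK | rewrite Hk subrK].
case: eqP => [->|_]; last by rewrite !andbF.
rewrite subrK kpos andbT !andbT.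
by case: (wpos w); rewrite ?mulr0 // mulrC.
Qed.


Lemma Gcoef0 k : Gcoef S p k 0 = (k == 0)%:R.
Proof.
rewrite /Gcoef.
have E (w : {ffun 'I_0 -> T}) : (wpos w && (walt w 0 == k)) = (k == 0).
  rewrite /walt big_ord0 eq_sym.
  have -> : wpos w by apply/forallP => -[m Hm].
  by [].
rewrite (eq_bigl (fun _ => k == 0)) //.
case: (k == 0); last by rewrite big_pred0.
rewrite (eq_bigr (fun _ => 1)); last by move=> w _; rewrite /wweight big_ord0.
rewrite sumr_const card_ffun.
have -> : #|'I_0| = 0%N by rewrite card_ord.
by rewrite expn0.
Qed.

Lemma Gcoef_pos0 n k : k <= 0 -> Gcoef S p k n.+1 = 0.
Proof.
move=> Hk; rewrite /Gcoef big1 // => w /andP [/forallP Hp /eqP Hw].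
have := Hp ord_max; rewrite /= Hw => H.
by have := lt_le_trans H Hk; rewrite ltxx.
Qed.

Lemma Gcoef_neg n k : k < 0 -> Gcoef S p k n = 0.
Proof.
case: n => [|n] Hk; last by apply: Gcoef_pos0; apply: ltW.
by rewrite Gcoef0 lt_eqF.
Qed.

Lemma walt_ge0 n (w : {ffun 'I_n -> T}) : wpos w -> 0 <= walt w n.
Proof.
case: n w => [|n] w Hw; first by rewrite /walt big_ord0.
by apply: ltW; have := forallP Hw ord_max.
Qed.

Lemma walt_le (h : nat) (hS : forall s, s \in S -> s <= h%:Z) n
  (w : {ffun 'I_n -> T}) : walt w n <= (n * h)%:Z.
Proof.
rewrite (walt_full _ (leqnn n)).
apply: le_trans (ler_sum _ (fun j _ => hS _ (mem_nth 0 (ltn_ord (w j))))) _.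
by rewrite sumr_const card_ord -mulr_natl PoszM natz.
Qed.

Lemma Mcoef_split (h : nat) (hS : forall s, s \in S -> s <= h%:Z) n K :
  (n * h < K)%N -> Mcoef S p n = \sum_(k < K) Gcoef S p (k : nat)%:Z n.
Proof.
move=> HK; rewrite /Mcoef /Gcoef.
under [RHS]eq_bigr => k _ do rewrite big_mkcond.
rewrite exchange_big big_mkcond /=; apply: eq_bigr => w _.
case: (boolP (wpos w)) => Hw /=; last by rewrite big1.
have H0 := walt_ge0 Hw; have H1 := walt_le hS w.
have Ha : (absz (walt w n) < K)%N.
  apply: leq_ltn_trans HK; rewrite -lez_nat abszE ger0_norm //.
rewrite (bigD1 (Ordinal Ha)) //= abszE ger0_norm // eqxx big1 ?addr0 //.
move=> k /negbTE Hk; case: eqP => // Hwk; exfalso; move: Hk.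
by rewrite -val_eqE /= Hwk absz_nat eqxx.
Qed.

End Walks.


Section HComplete.
Variables (R : realType) (h : nat).
Local Notation C := R[i].

Definition yX (a : C) : {poly C} := a%:P * 'X.
Definition Hpoly K (x : 'I_h -> C) : {poly C} :=
  \prod_(i < h) \sum_(j < K) (yX (x i)) ^+ j.
Definition Epoly (x : 'I_h -> C) : {poly C} := \prod_(i < h) (1 - yX (x i)).

Lemma leq_fsum K (f : {ffun 'I_h -> 'I_K}) i : (f i <= \sum_j f j)%N.
Proof. by rewrite (bigD1 i) //= leq_addr. Qed.

Lemma hcompleteK k K (x : 'I_h -> C) : (k < K)%N ->
  hcomplete k x = \sum_(f : {ffun 'I_h -> 'I_K} | (\sum_i (f i : nat) == k)%N)
                     \prod_i x i ^+ f i.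
Proof.
move=> kK.
pose hh := fun j : {ffun 'I_h -> 'I_k.+1} => [ffun i => widen_ord kK (j i)].
pose hh' := fun f : {ffun 'I_h -> 'I_K} => [ffun i => (inord (f i) : 'I_k.+1)].
rewrite (reindex_onto hh hh'); last first.
  move=> f /eqP Hf; apply/ffunP => i; rewrite !ffunE; apply: val_inj => /=.
  by rewrite inordK // ltnS -Hf leq_fsum.
rewrite /hcomplete; apply: eq_big => [j|j _]; last first.
  by apply: eq_bigr => i _; rewrite ffunE.
have -> : hh' (hh j) == j.
  by apply/eqP/ffunP => i; rewrite !ffunE; apply: val_inj; rewrite /= inord_val.
rewrite andbT; congr (_ == _); apply: eq_bigr => i _; by rewrite ffunE.
Qed.

Lemma coef_Hpoly K (x : 'I_h -> C) k :
  (Hpoly K x)`_k = \sum_(f : {ffun 'I_h -> 'I_K} | (\sum_i (f i : nat) == k)%N)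
                     \prod_i x i ^+ f i.
Proof.
rewrite /Hpoly bigA_distr_bigA /= coef_sum [RHS]big_mkcond /=.
apply: eq_bigr => f _.
have -> : \prod_i yX (x i) ^+ f i = (\prod_i x i ^+ f i)%:P * 'X^(\sum_i (f i : nat)).
  rewrite -prodrXr rmorph_prod -big_split /=; apply: eq_bigr => i _.
  by rewrite /yX exprMn rmorphXn.
by rewrite coefCM coefXn eq_sym; case: eqP; rewrite ?mulr1 ?mulr0.
Qed.

Lemma EH_prod K (x : 'I_h -> C) :
  Epoly x * Hpoly K x = \prod_(i < h) (1 - yX (x i) ^+ K).
Proof.
rewrite /Epoly /Hpoly -big_split /=; apply: eq_bigr => i _.
have := subrX1 (yX (x i)) K => E.
by rewrite -opprB mulNr -E opprB.
Qed.

Lemma EH_form K (x : 'I_h -> C) : exists Q, Epoly x * Hpoly K x = 1 + 'X^K * Q.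
Proof.
rewrite EH_prod.
apply: (big_ind (fun q => exists Q, q = 1 + 'X^K * Q)).
- by exists 0; rewrite mulr0 addr0.
- move=> _ _ [Q1 ->] [Q2 ->]; exists (Q1 + Q2 + 'X^K * Q1 * Q2); ring.
- move=> i _; exists (- (x i)%:P ^+ K); rewrite /yX exprMn; ring.
Qed.

Lemma coef_EH K (x : 'I_h -> C) m : (0 < m < K)%N ->
  (Epoly x * Hpoly K x)`_m = 0.
Proof.
move=> /andP [m0 mK]; have [Q ->] := EH_form K x.
by rewrite coefD coef1 coefXnM mK /= addr0; case: m m0 {mK}.
Qed.

Lemma geom_half K : \sum_(j < K) (2^-1 : C) ^+ j <= 2.
Proof.
have E : \sum_(j < K) (2^-1 : C) ^+ j = 2 - 2 * (2^-1) ^+ K.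
  elim: K => [|K IH]; first by rewrite big_ord0 expr0 mulr1 subrr.
  rewrite big_ord_recr /= IH exprS.
  have h2 : (2 : C) != 0 by rewrite pnatr_eq0.
  by field.
rewrite E gerBl mulr_ge0 // exprn_ge0 // invr_ge0 //.
Qed.

Lemma sum_bound K m (P : pred {ffun 'I_h -> 'I_K}) (x : 'I_h -> C) :
  (forall i, `|x i| <= 4^-1) -> (forall f, P f -> (m <= \sum_i (f i : nat))%N) ->
  \sum_(f | P f) `|\prod_i x i ^+ f i| <= 2 ^+ h * (2^-1) ^+ m.
Proof.
move=> Hx HP.
have h0 : (0 : C) <= 2^-1 by rewrite invr_ge0.
have step : forall f, P f -> `|\prod_i x i ^+ f i| <=
                     (2^-1) ^+ m * \prod_i (2^-1 : C) ^+ f i.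
  move=> f Pf; rewrite normr_prod.
  apply: (@le_trans _ _ (\prod_i ((2^-1 : C) ^+ f i * (2^-1) ^+ f i))).
    apply: ler_prod => i _; rewrite normr_ge0 /= normrX -exprMn.
    apply: lerXn2r; rewrite ?nnegrE ?normr_ge0 ?mulr_ge0 //.
    by rewrite -invfM -natrM.
  rewrite big_split /= [X in X * _ <= _]prodrXr; apply: ler_wpM2r.
    by apply: prodr_ge0 => i _; rewrite exprn_ge0.
  have Hm := HP f Pf.
  rewrite -(subnK Hm) exprD ler_piMl ?exprn_ge0 //.
  by apply: exprn_ile1 => //; rewrite invf_le1 // ler1n.
apply: le_trans (ler_sum _ step) _.
rewrite -mulr_sumr mulrC ler_wpM2r ?exprn_ge0 //.
apply: (@le_trans _ _ (\sum_(f : {ffun 'I_h -> 'I_K}) \prod_i (2^-1 : C) ^+ f i)).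
  rewrite big_mkcond /=; apply: ler_sum => f _.
  by case: (P f) => //; apply: prodr_ge0 => i _; rewrite exprn_ge0.
rewrite -(bigA_distr_bigA (fun (i : 'I_h) (j : 'I_K) => (2^-1 : C) ^+ j)) /=.
apply: (@le_trans _ _ (\prod_(i < h) (2 : C))); last first.
  by rewrite prodr_const card_ord.
apply: ler_prod => i _; rewrite geom_half andbT.
by apply: sumr_ge0 => j _; rewrite exprn_ge0.
Qed.

Lemma hcomplete_bound k (x : 'I_h -> C) : (forall i, `|x i| <= 4^-1) ->
  `|hcomplete k x| <= 2 ^+ h * (2^-1) ^+ k.
Proof.
move=> Hx; rewrite /hcomplete.
apply: le_trans (ler_norm_sum _ _ _) _.
by apply: sum_bound => // f /eqP ->.
Qed.

End HComplete.


Lemma expX_abs (F : fieldType) (t : F) (m : int) : 0 <= m -> t ^+ absz m = t ^ m.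
Proof. by move=> H; rewrite -{2}(gez0_abs H). Qed.

Section Kernel.
Variables (R : realType) (h : nat) (S : seq int) (p : int -> R).
Hypotheses (Suniq : uniq S) (ppos : forall s, s \in S -> 0 < p s)
  (Psym : forall u : R[i], u != 0 -> stepP S p u = stepP S p u^-1)
  (Sle : forall s, s \in S -> s <= h%:Z).
Local Notation C := R[i].

Lemma minS s : s \in S -> - (h%:Z) <= s.
Proof.
move=> Hs; rewrite leNgt; apply/negP => Hlt.
pose N := \sum_(s <- S) absz s.
have HN : forall s', s' \in S -> - (N%:Z) <= s' <= N%:Z.
  move=> s' Hs'; have : (absz s' <= N)%N by rewrite /N (bigD1_seq s') //= leq_addr.
  lia.
pose A : {poly C} := \sum_(s <- S) (p s)%:C%C *: 'X^(absz (s + N%:Z)).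
pose B : {poly C} := \sum_(s <- S) (p s)%:C%C *: 'X^(absz (N%:Z - s)).
have AB : A = B.
  apply/eqP; rewrite -subr_eq0; apply/eqP; apply: poly_eq0_nz => t tn0.
  rewrite hornerD hornerN !horner_sum; apply/eqP; rewrite subr_eq0; apply/eqP.
  have := Psym tn0; rewrite /stepP => E.
  transitivity (t ^+ N * \sum_(s <- S) (p s)%:C%C * t ^ s).
    rewrite mulr_sumr; apply: eq_big_seq => s' Hs'; rewrite hornerZ hornerXn.
    have H' := HN s' Hs'.
    rewrite expX_abs; last by lia.
    by rewrite expfzDr // mulrA mulrC.
  rewrite E mulr_sumr; apply: eq_big_seq => s' Hs'; rewrite hornerZ hornerXn.
  have H' := HN s' Hs'.
  rewrite expX_abs; last by lia.
  by rewrite expfzDr // exprz_inv mulrCA.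
have cA : A`_(absz (s + N%:Z)) = (p s)%:C%C.
  rewrite coef_sum (bigD1_seq s) //= coefZ coefXn eqxx mulr1.
  rewrite big_seq_cond big1 ?addr0 // => s' /andP [Hs' ne].
  rewrite coefZ coefXn; case: eqP; rewrite ?mulr0 // => Habs; exfalso.
  have H1 := HN s Hs; have H2 := HN s' Hs'.
  move/eqP: ne; apply; lia.
have cB : B`_(absz (s + N%:Z)) = 0.
  rewrite coef_sum big_seq big1 // => s' Hs'.
  rewrite coefZ coefXn; case: eqP; rewrite ?mulr0 // => Habs; exfalso.
  have H1 := HN s Hs; have H2 := HN s' Hs'; have H3 := Sle Hs'.
  lia.
have : (p s)%:C%C = 0 :> C by rewrite -cA AB cB.
by rewrite -(rmorph0 (real_complex R)) => /complexI /eqP; rewrite gt_eqF // ppos.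
Qed.

Lemma kernel_horner (z t : C) : t != 0 ->
  (kernel_poly S p h z).[t] = t ^+ h * (1 - z * stepP S p t).
Proof.
move=> tn0; rewrite /kernel_poly hornerD hornerN hornerZ horner_sum hornerXn.
rewrite /stepP mulrBr mulr1 mulr_sumr mulr_sumr; congr (_ - _).
rewrite mulr_sumr; apply: eq_big_seq => s Hs; rewrite hornerZ hornerXn.
have H := minS Hs.
rewrite expX_abs; last by lia.
rewrite expfzDr // (_ : t ^ (h%:Z) = t ^+ h) //; ring.
Qed.

Lemma kernel_size (z : C) : (size (kernel_poly S p h z) <= (h + h).+1)%N.
Proof.
apply/leq_sizeP => j Hj.
rewrite /kernel_poly coefB coefZ coef_sum coefXn.
have -> : (j == h) = false by apply/negbTE; lia.
rewrite big_seq big1 ?mulr0 ?subr0 // => s Hs.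
rewrite coefZ coefXn; have H1 := minS Hs; have H2 := Sle Hs.
have -> : (j == absz (s + h%:Z)) = false by apply/negbTE; lia.
by rewrite mulr0.
Qed.


Lemma coefH_hc K k (x : 'I_h -> C) : (k < K)%N -> (Hpoly K x)`_k = hcomplete k x.
Proof. by move=> kK; rewrite coef_Hpoly (hcompleteK _ kK). Qed.

Definition gt (x : 'I_h -> C) (j : int) : C :=
  if j < 0 then 0 else hcomplete (absz j) x.

Variables (z : C) (x : 'I_h -> C).
Hypothesis hdiv : \prod_(i < h) ('X - (x i)%:P) %| kernel_poly S p h z.

Let Pu := \prod_(i < h) ('X - (x i)%:P).
Let L := kernel_poly S p h z %/ Pu.
Definition Lrev := \poly_(m < h.+1) L`_(h - m).

Lemma kerLP : kernel_poly S p h z = L * Pu.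
Proof. by rewrite /L divpK. Qed.

Lemma size_Pu : size Pu = h.+1.
Proof. by rewrite /Pu size_prod_XsubC [index_enum _]unlock -enumT size_enum_ord. Qed.

Lemma sizeL : (size L <= h.+1)%N.
Proof.
case: (eqVneq L 0) => [->|Ln0]; first by rewrite size_poly0.
have := kernel_size z; rewrite kerLP size_mul //; last first.
  by apply: monic_neq0; apply: monic_prod_XsubC.
rewrite size_Pu addnS /= => H; rewrite -(leq_add2r h); apply: (leq_trans H); by rewrite addSn.
Qed.

Lemma Lrev_horner t : t != 0 -> Lrev.[t] = t ^+ h * L.[t^-1].
Proof.
move=> tn0; rewrite horner_poly (horner_coef_wide _ sizeL) mulr_sumr.
rewrite [RHS](reindex_inj rev_ord_inj) /=; apply: eq_bigr => m _.
rewrite subSS.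
have mh : (m <= h)%N by rewrite -ltnS.
have -> : t ^+ h = t ^+ m * t ^+ (h - m) by rewrite -exprD subnKC.
rewrite exprVn; have hn0 : t ^+ (h - m) != 0 by rewrite expf_neq0.
by rewrite -mulrA [t ^+ (h - m) * _]mulrCA mulfV // mulr1 mulrC. Qed.

Lemma Epoly_horner t : t != 0 -> (Epoly x).[t] = t ^+ h * Pu.[t^-1].
Proof.
move=> tn0; rewrite /Epoly /Pu !horner_prod.
transitivity (\prod_(i < h) (t * (t^-1 - x i))); last first.
  by rewrite big_split /= prodr_const card_ord; congr (_ * _); apply: eq_bigr => i _; rewrite hornerXsubC.
apply: eq_bigr => i _.
rewrite /yX !hornerE.
by rewrite mulrBr mulfV // mulrC.
Qed.

Lemma ker_fact : kernel_poly S p h z = Lrev * Epoly x.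
Proof.
apply/eqP; rewrite -subr_eq0; apply/eqP; apply: poly_eq0_nz => t tn0.
rewrite hornerD hornerN hornerM Lrev_horner // Epoly_horner //.
have ti0 : t^-1 != 0 by rewrite invr_eq0.
have E1 : L.[t^-1] * Pu.[t^-1] = (t^-1) ^+ h * (1 - z * stepP S p t).
  by rewrite -hornerM -kerLP kernel_horner // -(Psym tn0).
have Ti : t ^+ h * (t^-1) ^+ h = 1 by rewrite -exprMn mulfV // expr1n.
rewrite kernel_horner //.
have -> : t ^+ h * L.[t^-1] * (t ^+ h * Pu.[t^-1]) =
          t ^+ h * (t ^+ h * (L.[t^-1] * Pu.[t^-1])) by ring.
by rewrite E1 (mulrA (t ^+ h) ((t^-1) ^+ h)) Ti mul1r subrr.
Qed.

Lemma g_rec k : (0 < k)%N ->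
  hcomplete k x = z * \sum_(s <- S) (p s)%:C%C * gt x (k%:Z - s).
Proof.
move=> k0.
pose K := (h + k).+1.
have [Q HQ] := EH_form K x.
have E : (kernel_poly S p h z * Hpoly K x)`_(h + k) = 0.
  rewrite ker_fact -mulrA HQ mulrDr mulr1 coefD mulrCA coefXnM ltnSn addr0.
  by rewrite coef_poly ltnNge (_ : (h.+1 <= h + k)%N) //; lia.
move: E; rewrite /kernel_poly mulrBl coefB coefXnM ltnNge leq_addr /= addKn.
rewrite (coefH_hc _ (_ : (k < K)%N)); last by rewrite /K; lia.
move/eqP; rewrite subr_eq0 => /eqP ->.
rewrite -scalerAl coefZ mulr_suml coef_sum; congr (_ * _).
apply: eq_big_seq => s Hs; rewrite -scalerAl coefZ coefXnM; congr (_ * _).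
have H1 := minS Hs; have H2 := Sle Hs.
rewrite /gt; case: ifP => Hlt.
  by rewrite ifT //; lia.
rewrite ifF; last by lia.
rewrite coefH_hc; last by rewrite /K; lia.
congr (hcomplete _ _); lia.
Qed.

End Kernel.


Section Generic.
Variable R : realType.
Local Notation C := R[i].

Lemma sum_nat_ext (F : nat -> C) m m' : (forall i, 0 <= F i) -> (m <= m')%N ->
  \sum_(0 <= i < m) F i <= \sum_(0 <= i < m') F i.
Proof.
move=> F0 mm; rewrite (big_cat_nat (leq0n m) mm) /= lerDl.
by apply: sumr_ge0 => i _.
Qed.

Lemma shift_sum (f : int -> C) (h K : nat) (s : int) :
  (forall j, 0 <= f j) -> (forall j, j < 0 -> f j = 0) ->
  - (h%:Z) <= s <= h%:Z ->
  \sum_(0 <= j < K) f (j%:Z - s) <= \sum_(0 <= j < K + h) f j%:Z.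
Proof.
move=> f0 fneg Hs.
have F0 : forall G : nat -> int, forall i, 0 <= f (G i) by [].
case: (lerP 0 s) => s0.
  have -> : s = (absz s)%:Z by rewrite gez0_abs.
  set n := absz s.
  have nh : (n <= h)%N by rewrite /n; lia.
  apply: (le_trans (sum_nat_ext (F := fun j => f (j%:Z - n%:Z)) (fun i => f0 _) (leq_addr n K))).
  rewrite (big_cat_nat (leq0n n) (leq_addl _ _)) /= big1_seq ?add0r; last first.
    move=> i; rewrite mem_index_iota => /andP [_ Hi]; apply: fneg; lia.
  rewrite -{1}(add0n n) big_addn addnK.
  under eq_bigr => i _ do rewrite (_ : (i + n)%:Z - n%:Z = i%:Z) ?PoszD ?addrK //.
  by apply: sum_nat_ext => //; rewrite leq_addr.
have -> : s = - (absz s)%:Z by rewrite ltz0_abs // opprK.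
set n := absz s.
have nh : (n <= h)%N by rewrite /n; lia.
under eq_bigr => i _ do rewrite opprK -PoszD.
apply: (le_trans _ (sum_nat_ext (F := fun j => f j%:Z) (fun i => f0 _) (_ : (K + n <= K + h)%N))); last first.
  by rewrite leq_add2l.
have E : \sum_(n <= i < K + n) f i%:Z = \sum_(0 <= i < K) f (i + n)%N%:Z.
  by rewrite -{1}(add0n n) big_addn addnK.
rewrite (big_cat_nat (n := n) (leq0n n) (leq_addl K n)) /= E.
rewrite lerDr; by apply: sumr_ge0 => i _.
Qed.

Lemma decay (c : nat) (e : R) : 0 < e ->
  exists N0, forall n, (N0 <= n)%N -> (c%:R : C) * (2^-1) ^+ n < e%:C%C.
Proof.
move=> e0.
have ce0 : 0 <= (c%:R : R) / e by rewrite divr_ge0 // ltW.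
exists (Num.Def.archi_bound (c%:R / e)) => n Hn.
have H1 := archi_boundP ce0.
have H2 : (c%:R : R) / e < (2 ^ n)%:R.
  apply: (lt_le_trans H1); rewrite ler_nat; apply: (leq_trans Hn).
  by apply: ltnW; apply: ltn_expl.
have : (c%:R : R) * (2^-1) ^+ n < e.
  rewrite exprVn -natrX; rewrite ltr_pdivrMr ?ltr0n ?expn_gt0 //.
  by rewrite -ltr_pdivrMl // mulrC.
rewrite -ltcR => H; apply: le_lt_trans H; rewrite le_eqVlt; apply/orP; left.
by rewrite rmorphM rmorph_nat rmorphXn fmorphV rmorph_nat.
Qed.

Lemma series_of_bound (a : nat -> C) l (c : nat) :
  (forall n, `|\sum_(i < n) a i - l| <= c%:R * (2^-1) ^+ n) -> series_to a l.
Proof.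
move=> H e e0; have [N0 HN] := decay c e0.
by exists N0 => n Hn; apply: le_lt_trans (H n) (HN n Hn).
Qed.

Lemma prod1B n (w : 'I_n -> C) (d : C) : 0 <= d <= 1 -> (forall i, `|w i| <= d) ->
  `|\prod_i (1 - w i)| <= 2 ^+ n /\
  `|\prod_i (1 - w i) - 1| <= (n * 2 ^ n)%:R * d.
Proof.
move=> /andP [d0 d1] Hw.
have Hb : forall i, `|1 - w i| <= 2.
  move=> i; apply: (le_trans (ler_normB _ _)); rewrite normr1.
  by rewrite (_ : (2 : C) = 1 + 1) // lerD2l (le_trans (Hw i)).
elim: n w Hw Hb => [|n IH] w Hw Hb.
  by rewrite big_ord0 normr1 subrr normr0 expr0 mul0r lexx.
rewrite big_ord_recr /=.
have [IH1 IH2] := IH (fun i => w (widen_ord (leqnSn n) i)) (fun i => Hw _) (fun i => Hb _).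
set P := \prod_(i < n) _ in IH1 IH2 *.
split.
  by rewrite normrM exprSr ler_pM // normr_ge0.
have -> : P * (1 - w ord_max) - 1 = (P - 1) - P * w ord_max by ring.
apply: (le_trans (ler_normB _ _)); rewrite normrM.
apply: (le_trans (lerD IH2 (ler_pM _ _ IH1 (Hw ord_max)))) => //.
rewrite -mulrDl ler_wpM2r // -natrX -natrD ler_nat expnS; lia.
Qed.

End Generic.


Section Main.
Variables (R : realType) (h : nat) (S : seq int) (p : int -> R).
Hypotheses (Suniq : uniq S) (ppos : forall s, s \in S -> 0 < p s)
  (Psym : forall u : R[i], u != 0 -> stepP S p u = stepP S p u^-1)
  (Sle : forall s, s \in S -> s <= h%:Z).
Local Notation C := R[i].
Variables (z : C) (x : 'I_h -> C).
Hypotheses (hdiv : \prod_(i < h) ('X - (x i)%:P) %| kernel_poly S p h z)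
  (hx : forall i, `|x i| <= 4^-1)
  (hz : `|z| * (\sum_(s <- S) p s)%:C%C <= 2^-1).

Definition fN N (k : int) : C := \sum_(n < N) (Gcoef S p k n)%:C%C * z ^+ n.
Definition eN N k := gt x k - fN N k.

Lemma hc0 : hcomplete 0 x = 1.
Proof.
rewrite -(@coefH_hc _ _ 1) // /Hpoly big1 ?coef1 // => i _.
by rewrite big_ord1 expr0.
Qed.

Lemma gt_nat k : gt x k%:Z = hcomplete k x.
Proof. by rewrite /gt ltNge lez_nat leq0n. Qed.

Lemma fN_neg N k : k < 0 -> fN N k = 0.
Proof. by move=> Hk; rewrite /fN big1 // => n _; rewrite Gcoef_neg // rmorph0 mul0r. Qed.

Lemma fN_0 N : fN N.+1 0 = 1.
Proof.
rewrite /fN big_ord_recl Gcoef0 eqxx rmorph1 expr0 mulr1 big1 ?addr0 // => n _.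
by rewrite /= Gcoef_pos0 // rmorph0 mul0r.
Qed.

Lemma fN_rec N k : 0 < k ->
  fN N.+1 k = z * \sum_(s <- S) (p s)%:C%C * fN N (k - s).
Proof.
move=> k0; rewrite /fN big_ord_recl Gcoef0 (gt_eqF k0) rmorph0 mul0r add0r.
under eq_bigr => n _ do rewrite /= Gcoef_S // rmorph_sum /= mulr_suml.
rewrite exchange_big mulr_sumr; apply: eq_bigr => s _.
rewrite !mulr_sumr; apply: eq_bigr => n _.
rewrite rmorphM /= exprS; ring.
Qed.

Lemma eN_neg N k : k < 0 -> eN N k = 0.
Proof. by move=> Hk; rewrite /eN fN_neg // /gt Hk subrr. Qed.

Lemma eN_0 N : eN N.+1 0 = 0.
Proof. by rewrite /eN fN_0 (gt_nat 0) hc0 subrr. Qed.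

Lemma eN0 k : eN 0 k = gt x k.
Proof. by rewrite /eN /fN big_ord0 subr0. Qed.

Lemma eN_rec N k : 0 < k ->
  eN N.+1 k = z * \sum_(s <- S) (p s)%:C%C * eN N (k - s).
Proof.
move=> k0; rewrite /eN fN_rec //.
have -> : k = (absz k)%:Z by rewrite gez0_abs // ltW.
rewrite gt_nat (g_rec Suniq ppos Psym Sle hdiv); last by lia.
rewrite -mulrBr -sumrB.
by congr (_ * _); apply: eq_bigr => s _; rewrite mulrBr.
Qed.

Lemma gt_bound j : `|gt x j%:Z| <= 2 ^+ h * (2^-1) ^+ j.
Proof. by rewrite gt_nat hcomplete_bound. Qed.

Lemma half_ge0 : (0 : C) <= 2^-1.
Proof. by rewrite invr_ge0. Qed.

Lemma l1 N K : \sum_(0 <= j < K) `|eN N j%:Z| <= (2^-1) ^+ N * 2 ^+ h.+1.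
Proof.
elim: N K => [|N IH] K.
  rewrite expr0 mul1r.
  under eq_bigr => j _ do rewrite eN0.
  apply: (le_trans (ler_sum _ (fun j _ => gt_bound j))).
  rewrite -mulr_sumr exprSr ler_wpM2l ?exprn_ge0 //.
  by rewrite big_mkord geom_half.
have step : forall j, `|eN N.+1 j%:Z| <=
    `|z| * \sum_(s <- S) (p s)%:C%C * `|eN N (j%:Z - s)|.
  move=> j; case: j => [|j].
    rewrite eN_0 normr0 mulr_ge0 ?normr_ge0 //.
    rewrite big_seq; apply: sumr_ge0 => s Hs; rewrite mulr_ge0 ?normr_ge0 //.
    by rewrite ler0c ltW // ppos.
  rewrite eN_rec // normrM ler_wpM2l ?normr_ge0 //.
  apply: le_trans (ler_norm_sum _ _ _) _.
  rewrite big_seq [X in _ <= X]big_seq; apply: ler_sum => s Hs.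
  by rewrite normrM ger0_norm // ler0c ltW // ppos.
apply: le_trans (ler_sum _ (fun j _ => step j)) _.
rewrite -mulr_sumr.
apply: (@le_trans _ _ (`|z| * \sum_(s <- S) (p s)%:C%C * ((2^-1) ^+ N * 2 ^+ h.+1))).
  rewrite ler_wpM2l ?normr_ge0 // exchange_big /= big_seq [X in _ <= X]big_seq.
  apply: ler_sum => s Hs; rewrite -mulr_sumr; apply: ler_wpM2l; first by rewrite ler0c ltW // ppos.
  apply: le_trans _ (IH (K + h)%N).
  apply: (shift_sum (f := fun j => `|eN N j|)).
  - by move=> j; rewrite normr_ge0.
  - by move=> j Hj; rewrite eN_neg // normr0.
  - by rewrite (minS Suniq ppos Psym Sle Hs) (Sle Hs).
rewrite -mulr_suml -rmorph_sum mulrA.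
apply: (le_trans (ler_wpM2r _ hz)); first by rewrite mulr_ge0 ?exprn_ge0 ?ler0n ?half_ge0.
by rewrite mulrA -exprS.
Qed.


Lemma two_half : (2^-1 : C) + 2^-1 = 1.
Proof. by field. Qed.

Lemma half_le1 : (2^-1 : C) <= 1.
Proof. by rewrite invf_le1 ?ltr0n // ler1n. Qed.

Lemma hx2 i : `|x i| <= 2^-1.
Proof.
apply: (le_trans (hx i)); rewrite (_ : (4^-1 : C) = 2^-1 * 2^-1).
  by apply: ler_piMr; [exact: half_ge0 | exact: half_le1].
by rewrite -invfM -natrM.
Qed.

Lemma inv1B_bound i : `|(1 - x i)^-1| <= 2.
Proof.
have H : 2^-1 <= `|1 - x i|.
  apply: le_trans (lerB_dist _ _); rewrite normr1 lerBrDr -{2}two_half lerD2l.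
  exact: hx2.
have hp : (0 : C) < 2^-1 by rewrite invr_gt0 ltr0n.
rewrite normfV -[X in _ <= X]invrK lef_pV2 // posrE.
by apply: lt_le_trans H.
Qed.

Lemma x_ne1 i : 1 - x i != 0.
Proof.
apply/eqP => /subr0_eq E; have := hx2 i; rewrite -E normr1 => H.
have : (2^-1 : C) < 1 by rewrite invf_lt1 ?ltr0n // ltr1n.
by move/lt_geF; rewrite H.
Qed.

Lemma Gseries k : (1 <= k)%N ->
  series_to (fun n => (Gcoef S p k%:Z n)%:C%C * z ^+ n) (hcomplete k x).
Proof.
move=> k1; apply: (series_of_bound (c := (2 ^ h.+1)%N)) => n.
rewrite -/(fN n k%:Z) distrC -gt_nat -/(eN n k%:Z).
apply: (@le_trans _ _ (\sum_(0 <= j < k.+1) `|eN n j%:Z|)).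
  by rewrite big_nat_recr //= lerDr; apply: sumr_ge0 => j _.
by apply: le_trans (l1 n k.+1) _; rewrite natrX mulrC.
Qed.

Lemma sum_pick K (m : nat) (a : C) :
  \sum_(k < K) (if m == (k : nat) then a else 0) = if (m < K)%N then a else 0.
Proof.
case: ltnP => H.
  rewrite (bigD1 (Ordinal H)) // (ifT _ _ (eqxx m)) /= big1 ?addr0 // => k.
  by move=> Hk; rewrite ifF //; apply/negbTE; apply: contra Hk => /eqP Hm; apply/eqP; apply: val_inj; rewrite /= Hm.
rewrite (eq_bigr (fun=> 0)); first by rewrite big1_eq.
by move=> k _; rewrite (gtn_eqF (leq_trans (ltn_ord k) H)).
Qed.

Lemma sum_hc K : \sum_(k < K) hcomplete k x =
  \sum_(f : {ffun 'I_h -> 'I_K} | (\sum_i (f i : nat) < K)%N) \prod_i x i ^+ f i.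
Proof.
under eq_bigr => k _ do rewrite (hcompleteK x (ltn_ord k)) big_mkcond.
rewrite exchange_big [RHS]big_mkcond; apply: eq_bigr => f _ /=.
by rewrite sum_pick.
Qed.

Definition Lx := \prod_(i < h) (1 - x i)^-1.

Lemma Lx_bound : `|Lx| <= 2 ^+ h.
Proof.
rewrite /Lx normr_prod.
apply: (@le_trans _ _ (\prod_(i < h) (2 : C))); last by rewrite prodr_const card_ord.
by apply: ler_prod => i _; rewrite normr_ge0 inv1B_bound.
Qed.

Lemma prod_geo K : \prod_(i < h) \sum_(j < K) x i ^+ j =
  Lx * \prod_(i < h) (1 - x i ^+ K).
Proof.
rewrite /Lx -big_split /=; apply: eq_bigr => i _.
apply: (mulfI (x_ne1 i)); rewrite mulrA mulfV ?x_ne1 // mul1r.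
by rewrite -opprB mulNr -subrX1 opprB.
Qed.

Definition c2 := (2 ^ h + 2 ^ h * (h * 2 ^ h))%N.

Lemma hc_partial K :
  `|\sum_(k < K) hcomplete k x - Lx| <= c2%:R * (2^-1) ^+ K.
Proof.
have E : \sum_(k < K) hcomplete k x =
   \prod_(i < h) \sum_(j < K) x i ^+ j -
   \sum_(f : {ffun 'I_h -> 'I_K} | ~~ (\sum_i (f i : nat) < K)%N) \prod_i x i ^+ f i.
  rewrite sum_hc bigA_distr_bigA /= [X in _ = X - _](bigID (fun f : {ffun 'I_h -> 'I_K} =>
     (\sum_i (f i : nat) < K)%N)) /=.
  by rewrite addrK.
rewrite E prod_geo addrAC -{2}(mulr1 Lx) -mulrBr.
apply: (le_trans (ler_normB _ _)).
have hd : 0 <= (2^-1 : C) ^+ K <= 1.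
  by apply/andP; split; [apply: exprn_ge0; exact: half_ge0 | apply: exprn_ile1; [exact: half_ge0 | exact: half_le1]].
have hw : forall i, `|x i ^+ K| <= (2^-1) ^+ K.
  by move=> i; rewrite normrX lerXn2r ?nnegrE ?normr_ge0 ?half_ge0 ?hx2.
have [_ Hp] := @prod1B _ h (fun i => x i ^+ K) _ hd hw.
have B2 : `|\sum_(f : {ffun 'I_h -> 'I_K} | ~~ (\sum_i (f i : nat) < K)%N)
            \prod_i x i ^+ f i| <= 2 ^+ h * (2^-1) ^+ K.
  apply: le_trans (ler_norm_sum _ _ _) _.
  by apply: sum_bound => // f; rewrite -leqNgt.
rewrite normrM /c2 natrD mulrDl addrC; apply: lerD.
  by rewrite natrX.
rewrite natrM natrX -mulrA; apply: ler_pM; rewrite ?normr_ge0 //.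
exact: Lx_bound.
Qed.

Lemma Hseries : series_to
  (fun k => if k == 0%N then 1 else hcomplete k x) Lx.
Proof.
apply: (series_of_bound (c := c2)) => K.
rewrite (eq_bigr (fun k : 'I_K => hcomplete k x)) ?hc_partial //.
by move=> [[|k] Hk] _ //=; rewrite hc0.
Qed.

Lemma Mseries : (1 <= h)%N ->
  series_to (fun n => (Mcoef S p n)%:C%C * z ^+ n) Lx.
Proof.
move=> h1; apply: (series_of_bound (c := (2 ^ h.+1 + c2)%N)) => N.
pose K := (N * h).+1.
have E : \sum_(n < N) (Mcoef S p n)%:C%C * z ^+ n = \sum_(k < K) fN N k%:Z.
  transitivity (\sum_(n < N) \sum_(k < K) (Gcoef S p k%:Z n)%:C%C * z ^+ n).
    apply: eq_bigr => n _.
    rewrite (@Mcoef_split _ S p h Sle n K) ?rmorph_sum ?mulr_suml //.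
    by rewrite /K ltnS leq_mul2r (ltnW (ltn_ord n)) orbT.
  by rewrite exchange_big.
rewrite E.
have NK : (N <= K)%N by rewrite /K; apply: leqW; rewrite leq_pmulr.
apply: (le_trans (ler_distD (\sum_(k < K) hcomplete k x) _ _)).
rewrite natrD mulrDl; apply: lerD.
  rewrite distrC.
  have -> : \sum_(k < K) hcomplete k x - \sum_(k < K) fN N k%:Z =
            \sum_(k < K) eN N k%:Z.
    by rewrite -sumrB; apply: eq_bigr => k _; rewrite /eN gt_nat.
  apply: (le_trans (ler_norm_sum _ _ _)).
  rewrite -(big_mkord xpredT (fun k => `|eN N k%:Z|)).
  by apply: le_trans (l1 N K) _; rewrite natrX mulrC.
apply: (le_trans (hc_partial K)); apply: ler_wpM2l => //.
rewrite -(subnK NK) exprD; apply: ler_piMl; rewrite ?exprn_ge0 ?half_ge0 //.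
by rewrite exprn_ile1 ?half_ge0 ?half_le1.
Qed.

End Main.


Lemma uniform_small (R : realType) (h : nat) (u : 'I_h -> R[i] -> R[i]) (e : R) :
  0 < e ->
  (forall i : 'I_h, forall e : R, 0 < e -> exists d : R, 0 < d /\
      forall z : R[i], 0 < `|z| < d%:C%C -> `|u i z| < e%:C%C) ->
  exists d : R, 0 < d /\ forall z : R[i], 0 < `|z| < d%:C%C ->
     forall i : 'I_h, `|u i z| < e%:C%C.
Proof.
move=> e0 Hs.
suff: forall n, (n <= h)%N -> exists d : R, 0 < d /\ forall z : R[i],
   0 < `|z| < d%:C%C -> forall i : 'I_h, (i < n)%N -> `|u i z| < e%:C%C.
  move=> /(_ h (leqnn h)) [d [d0 Hd]]; exists d; split => // z Hz i.
  exact: Hd.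
elim=> [|n IH] Hn.
  by exists 1; split => // z _ i; rewrite ltn0.
have [d1 [d10 H1]] := IH (ltnW Hn).
have [d2 [d20 H2]] := Hs (Ordinal Hn) e e0.
exists (Order.min d1 d2); split; first by rewrite lt_min d10 d20.
move=> z /andP [z0 zd] i; rewrite ltnS leq_eqVlt => /orP [/eqP Ei|Hi].
  have -> : i = Ordinal Hn by apply: val_inj.
  apply: H2; rewrite z0 /=; apply: (lt_le_trans zd).
  by rewrite lecR ge_min lexx orbT.
apply: H1 => //; rewrite z0 /=; apply: (lt_le_trans zd).
by rewrite lecR ge_min lexx.
Qed.


End Helpers.
Import Helpers.

Theorem theorem4p1 (R : realType) (h : nat) (S : seq int) (p : int -> R)
  (hpos : (1 <= h)%N) (Suniq : uniq S)
  (ppos : forall s, s \in S -> 0 < p s)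
  (Psym : forall u : R[i], u != 0 -> stepP S p u = stepP S p u^-1)
  (hmax : h%:Z \in S) (Sle : forall s, s \in S -> s <= h%:Z)
  (u : 'I_h -> R[i] -> R[i]) (usmall : small_roots S p u) :
  exists r : R, 0 < r /\ forall z : R[i], 0 < `|z| < r%:C%C ->
    [/\ series_to (fun n => (Mcoef S p n)%:C%C * z ^+ n)
          (\prod_(i < h) (1 - u i z)^-1),
        series_to (fun k => if k == 0%N then 1 else hcomplete k (fun i => u i z))
          (\prod_(i < h) (1 - u i z)^-1)
      & forall k : nat, (1 <= k)%N ->
          series_to (fun n => (Gcoef S p k%:Z n)%:C%C * z ^+ n)
            (hcomplete k (fun i => u i z))].
Proof.
move: usmall => [[r0 [r00 Hdiv]] Hsmall].
have e0 : (0 : R) < 4^-1 by rewrite invr_gt0 ltr0n.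
have [d [d0 Hd]] := @uniform_small R h u _ e0 Hsmall.
pose P1 := \sum_(s <- S) p s.
have P10 : 0 <= P1 by rewrite /P1 big_seq; apply: sumr_ge0 => s Hs; apply: ltW; apply: ppos.
pose r3 : R := 2^-1 / (P1 + 1).
have r30 : 0 < r3 by rewrite /r3 divr_gt0 ?invr_gt0 ?ltr0n // ltr_wpDl.
have r3P : r3 * P1 <= 2^-1.
  rewrite /r3 mulrAC ler_pdivrMr ?ltr_wpDl // ler_wpM2l ?invr_ge0 ?ler0n //.
  by rewrite lerDl.
exists (Order.min r0 (Order.min d r3)); split.
  by rewrite !lt_min r00 d0 r30.
move=> z /andP [z0 zr].
have zr0 : 0 < `|z| < r0%:C%C.
  by rewrite z0 /=; apply: (lt_le_trans zr); rewrite lecR ge_min lexx.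
have zd : 0 < `|z| < d%:C%C.
  by rewrite z0 /=; apply: (lt_le_trans zr); rewrite lecR !ge_min lexx orbT.
have zr3 : `|z| <= r3%:C%C.
  by apply: ltW; apply: (lt_le_trans zr); rewrite lecR !ge_min lexx !orbT.
have hdiv := Hdiv z zr0.
have hx : forall i, `|u i z| <= 4^-1.
  move=> i; apply: ltW; have := Hd z zd i.
  by rewrite fmorphV rmorph_nat.
have hz : `|z| * (\sum_(s <- S) p s)%:C%C <= 2^-1.
  apply: (le_trans (ler_wpM2r _ zr3)); first by rewrite ler0c.
  by rewrite -rmorphM -(rmorph_nat (real_complex R) 2) -fmorphV lecR.
split.
- exact: (Mseries Suniq ppos Psym Sle hdiv hx hz hpos).
- exact: (@Hseries R h (fun i => u i z) hx).
- move=> k k1; exact: (Gseries Suniq ppos Psym Sle hdiv hx hz k1).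
Qed.
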